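(* Let $n\ge1$ and let $\alpha=(a_n,\ldots,a_1)$ be a restricted sequence. In the expansion of $e'_\alpha$ as a $\mathbb{Q}(q)$-linear combination of the basis $\{e_\beta\}$ of $V_n$, the coefficient of $e_\alpha$ equals $1$.
   Context: $D_n$: non-crossing perfect matchings of $\{1,\ldots,2n\}$ (non-crossing $n$-chord diagrams), $D_0=\{\phi\}$. For $1\le k\le 2n+1$, $l_k:D_n\to D_{n+1}$: $l_k(\alpha)$ matches $k$ with $k+1$, old point $i$ becomes $i$ if $i<k$ and $i+2$ if $i\ge k$. Restricted sequence of $\alpha\in D_n$: let $k_n$ be the smallest $k$ with $k$ matched to $k+1$; it is $(k_n,k_{n-1},\ldots,k_1)$ with $(k_{n-1},\ldots,k_1)$ the restricted sequence of $\alpha$ with that arc removed (empty for $\phi$). This is a bijection from $D_n$ to restricted sequences of length $n$; $e_{(a_n,\ldots,a_1)}$ denotes the corresponding diagram. $V_n$: $\mathbb{Q}(q)$-vector space with basis $D_n$ ($q$ an indeterminate), $l_k$ extended linearly. $\Delta_{-1}=0$, $\Delta_0=1$, $\Delta_k=q\Delta_{k-1}-\Delta_{k-2}$. $e'$: $e'_{(1)}=e_{(1)}$; for $n\ge2$, $e'_{(a_n,\ldots,a_1)}=l_{a_n}(e'_{(a_{n-1},\ldots,a_1)})-\frac{\Delta_{a_n-2}}{\Delta_{a_n-1}}e'_{(a_n-1,a_{n-1},\ldots,a_1)}$ if $a_n\ge2$, and $e'_{(1,a_{n-1},\ldots,a_1)}=l_1(e'_{(a_{n-1},\ldots,a_1)})$.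 *)

(* Defs.v *)
From HB Require Import structures.
From mathcomp Require Import all_boot all_order all_algebra.
Set Implicit Arguments. Unset Strict Implicit. Unset Printing Implicit Defensive.
Import Order.TTheory GRing.Theory Num.Theory.

(* ---------- chord diagrams ----------
   A diagram on {1,..,2n} is encoded canonically as the sequence s of length 2n
   whose (i-1)-th entry is the partner of point i (points are 1-indexed). *)

Definition partner (s : seq nat) (i : nat) : nat := nth 0 s i.-1.

Definition is_ncd (n : nat) (s : seq nat) : bool :=
  [&& size s == 2 * n,
      all (fun i => [&& 1 <= partner s i <= 2 * n, partner s i != i
                      & partner s (partner s i) == i]) (iota 1 (2 * n))
    & all (fun a => all (fun b =>
            ~~ ((a < b) && (b < partner s a) && (partner s a < partner s b)))
          (iota 1 (2 * n))) (iota 1 (2 * n))].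

(* l_k : D_n -> D_{n+1}: match k with k+1, old point i goes to i if i<k, i+2 if i>=k *)
Definition shiftk (k i : nat) : nat := if i < k then i else i.+2.

Definition lk (k : nat) (s : seq nat) : seq nat :=
  mkseq (fun j => let p := j.+1 in
           if p == k then k.+1 else if p == k.+1 then k
           else shiftk k (partner s (if p < k then p else p - 2)))
        (size s).+2.

(* removal of the arc (k,k+1) (inverse of lk k) *)
Definition unshiftk (k i : nat) : nat := if i < k then i else i - 2.

Definition removek (k : nat) (s : seq nat) : seq nat :=
  mkseq (fun j => let p := j.+1 in
           unshiftk k (partner s (if p < k then p else p.+2)))
        (size s - 2).

Definition first_short_arc (s : seq nat) : nat :=
  let l := iota 1 (size s) in
  nth 0 l (find (fun k => partner s k == k.+1) l).

(* restricted sequence (k_n, ..., k_1) of a diagram with n chords (head = k_n) *)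
Fixpoint rseq (n : nat) (s : seq nat) : seq nat :=
  match n with
  | 0 => [::]
  | n'.+1 => let k := first_short_arc s in k :: rseq n' (removek k s)
  end.

Definition is_restricted (n : nat) (alpha : seq nat) : Prop :=
  exists s, is_ncd n s /\ rseq n s = alpha.

Definition Qq := {fraction {poly rat}}.
Definition q : Qq := tofrac ('X : {poly rat}).

Local Open Scope ring_scope.

Fixpoint Delta_aux (k : nat) : Qq * Qq :=   (* (Delta_{k-1}, Delta_k) *)
  match k with
  | 0 => (0, 1)
  | k'.+1 => let: (a, b) := Delta_aux k' in (b, q * b - a)
  end.
Definition Delta (k : nat) : Qq := (Delta_aux k).2.

(* A vector of V_n: a finite formal Q(q)-linear combination of diagrams *)
Definition vec := seq (Qq * seq nat).

Definition vscale (c : Qq) (v : vec) : vec := [seq (c * t.1, t.2) | t <- v].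
Definition vadd (v w : vec) : vec := v ++ w.
Definition vsub (v w : vec) : vec := vadd v (vscale (-1) w).
Definition vlk (k : nat) (v : vec) : vec := [seq (t.1, lk k t.2) | t <- v].
Definition coef (v : vec) (d : seq nat) : Qq := \sum_(t <- v | t.2 == d) t.1.

(* e'_{(a, a_{n-1},...,a_1)} given v = e'_{(a_{n-1},...,a_1)} *)
Fixpoint eprime_head (v : vec) (a : nat) : vec :=
  match a with
  | 0 => [::]                       (* never used: restricted sequences have entries >= 1 *)
  | 1 => vlk 1 v
  | (b.+1) as a' =>
      match b with
      | 0 => vlk 1 v
      | b'.+1 => vsub (vlk a' v) (vscale (Delta b' / Delta b) (eprime_head v b))
      end
  end.

(* e'_alpha, alpha = (a_n, ..., a_1) given as the list [:: a_n; ...; a_1].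
   Convention e'_() = phi, so that e'_{(1)} = l_1(phi) = e_{(1)}. *)
Fixpoint eprime (alpha : seq nat) : vec :=
  match alpha with
  | [::] => [:: (1, [::])]
  | a :: t => eprime_head (eprime t) a
  end.

(* Main.v *)
Require Import Defs.
From mathcomp Require Import all_boot all_order all_algebra zify.
Set Implicit Arguments. Unset Strict Implicit. Unset Printing Implicit Defensive.

Lemma partner_mkseq f m p : 0 < p -> p <= m -> partner (mkseq f m) p = f p.-1.
Proof. move=> h1 h2; rewrite /partner nth_mkseq //; lia. Qed.

Lemma size_lk k s : size (lk k s) = (size s).+2.
Proof. by rewrite size_mkseq. Qed.
Lemma size_removek k s : size (removek k s) = size s - 2.
Proof. by rewrite size_mkseq. Qed.

Lemma partner_removek k s p : 0 < p -> p <= size s - 2 ->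
  partner (removek k s) p = unshiftk k (partner s (shiftk k p)).
Proof. move=> h1 h2; rewrite partner_mkseq // prednK //. Qed.

Lemma partner_lk k s p : 0 < p -> p <= (size s).+2 ->
  partner (lk k s) p = if p == k then k.+1 else if p == k.+1 then k
           else shiftk k (partner s (if p < k then p else p - 2)).
Proof. move=> h1 h2; rewrite partner_mkseq // prednK //. Qed.

Lemma unshiftk_shiftk k x : unshiftk k (shiftk k x) = x.
Proof. rewrite /unshiftk /shiftk; case: (ltnP x k) => h; first by rewrite h.
by rewrite (_ : x.+2 < k = false); [lia|lia]. Qed.

Lemma partner_lk_shift k s p : 0 < p -> p <= size s ->
  partner (lk k s) (shiftk k p) = shiftk k (partner s p).
Proof.
move=> h1 h2; rewrite partner_lk; last (rewrite /shiftk; case: ifP; lia); last (rewrite /shiftk; case: ifP; lia).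
rewrite /shiftk; case: (ltnP p k) => h.
  rewrite (_ : (p == k) = false); last lia.
  rewrite (_ : (p == k.+1) = false); last lia.
  by rewrite h.
rewrite (_ : (p.+2 == k) = false); last lia.
rewrite (_ : (p.+2 == k.+1) = false); last lia.
rewrite (_ : (p.+2 < k) = false); last lia.
by rewrite (_ : p.+2 - 2 = p); last lia.
Qed.

Lemma removek_lk k s : removek k (lk k s) = s.
Proof.
apply: (@eq_from_nth _ 0); first by rewrite size_removek size_lk; lia.
move=> j; rewrite size_removek size_lk => hj.
have := @partner_removek k (lk k s) j.+1 erefl.
rewrite size_lk partner_lk_shift ?unshiftk_shiftk; try lia.
by rewrite /partner /=; apply.
Qed.

Definition good n s := [/\ size s = 2*n,
  forall i, 0 < i <= 2*n -> [/\ 0 < partner s i <= 2*n, partner s i != i & partner s (partner s i) = i]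
  & forall a b, 0 < a <= 2*n -> 0 < b <= 2*n -> ~~ [&& a < b, b < partner s a & partner s a < partner s b]].

Lemma ncd_good n s : is_ncd n s -> good n s.
Proof.
case/and3P => /eqP hs /allP h1 /allP h2; split => //.
  move=> i hi; have /h1/and3P[] : i \in iota 1 (2*n) by rewrite mem_iota; lia.
  by move=> -> -> /eqP ->.
move=> a b ha hb.
have /h2/allP/(_ b) : a \in iota 1 (2*n) by rewrite mem_iota; lia.
rewrite mem_iota andbA; apply; lia.
Qed.

Lemma short_arc_exists n s : good n s -> 0 < n ->
  exists k, [/\ 0 < k, k < 2*n & partner s k = k.+1].
Proof.
case=> hs hp hnc n0.
have ex : exists m, (0 < m <= 2*n) && (partner s m < m).
  exists (2*n); case: (hp (2*n)); first lia.
  move=> /andP[_ h] /eqP h' _; apply/andP; split; lia.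
case: (ex_minnP ex) => m /andP[hm hpm] hmin.
case: (hp m hm) => /andP[j0 _] _ hjj.
set j := partner s m in j0 hpm hjj.
exists m.-1.
have c0 : 0 < m.-1 by lia.
case: (hp m.-1); first lia.
move=> /andP[_ hc] /eqP hc' hcc.
case: (ltnP (partner s m.-1) m.-1) => hlt.
  have := hmin m.-1; rewrite hlt andbT.
  have -> : 0 < m.-1 <= 2 * n by lia.
  move=> /(_ isT); lia.
case: (eqVneq (partner s m.-1) m) => heq; first by split => //; [lia | rewrite heq; lia].
have hjc : j < m.-1.
  case: (eqVneq j m.-1) => hj; last lia.
  by move: heq; rewrite -hj hjj eqxx.
have := hnc j m.-1; rewrite hjj.
have -> : j < m.-1 by lia.
have -> : m.-1 < m by lia.
have -> : m < partner s m.-1 by lia.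
move=> /(_ _ _)/negP; case => //; lia.
Qed.

Lemma fsaP n s : good n s -> 0 < n ->
  [/\ 0 < first_short_arc s, first_short_arc s < 2*n,
      partner s (first_short_arc s) = (first_short_arc s).+1 &
      forall j, 0 < j < first_short_arc s -> partner s j != j.+1].
Proof.
move=> g n0; have [k [k0 kn hk]] := short_arc_exists g n0.
case: g => hs hp hnc.
set l := iota 1 (size s).
set P := (fun k => partner s k == k.+1).
have hasP : has P l.
  apply/hasP; exists k; last by rewrite /P hk.
  rewrite mem_iota; lia.
have hf : find P l < size s by rewrite -(size_iota 1 (size s)) -has_find.
have e : first_short_arc s = (find P l).+1.
  by rewrite /first_short_arc -/l nth_iota // add1n.
have /eqP hP : P (first_short_arc s) by have := nth_find 0 hasP.
rewrite e; split => //.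
- have : (find P l).+1 <= size s by lia.
  rewrite -e hs => h.
  case: (hp (first_short_arc s)); first lia.
  rewrite hP; lia.
- by rewrite -e.
move=> j hj.
have := before_find 0 (s := l) (a := P) (i := j.-1).
rewrite /l nth_iota; last lia.
rewrite (_ : 1 + j.-1 = j); last lia.
rewrite -/l => h; apply/negbT; apply: h; lia.
Qed.

Lemma shiftk_lt k a b : (shiftk k a < shiftk k b) = (a < b).
Proof. rewrite /shiftk; case: (ltnP a k) => ha; case: (ltnP b k) => hb /=; lia. Qed.

Lemma shiftk_inj k : injective (shiftk k).
Proof.
move=> a b e; case: (ltngtP a b) => // h.
  by move: h; rewrite -(shiftk_lt k) e ltnn.
by move: h; rewrite -(shiftk_lt k) e ltnn.
Qed.

Lemma shiftk_unshiftk k y : y != k -> y != k.+1 -> shiftk k (unshiftk k y) = y.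
Proof.
move=> h1 h2; rewrite /shiftk /unshiftk; case: (ltnP y k) => h; first by rewrite h.
rewrite (_ : y - 2 < k = false); lia.
Qed.

Lemma good_removek n s k : good n.+1 s -> 0 < k -> partner s k = k.+1 ->
  good n (removek k s) /\ lk k (removek k s) = s.
Proof.
case=> hs hp hnc k0 hk.
have kle : k <= 2 * n.+1.
  rewrite leqNgt; apply/negP => h; move: hk; rewrite /partner nth_default //; lia.
have kn : k < 2 * n.+1.
  case: (hp k); first lia. rewrite hk; lia.
have hk1 : partner s k.+1 = k by case: (hp k) => [|_ _]; [lia | rewrite hk].
have hf a : 0 < a <= 2 * n -> [/\ 0 < shiftk k a <= 2 * n.+1, shiftk k a != k & shiftk k a != k.+1].
  by rewrite /shiftk; case: ifP => h; split; lia.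
have hq y : 0 < y <= 2 * n.+1 -> y != k -> y != k.+1 ->
   [/\ 0 < partner s y <= 2 * n.+1, partner s y != k & partner s y != k.+1].
  move=> hy h1 h2; case: (hp y hy) => r1 r2 r3; split => //.
    by apply/eqP => e; move: h2; rewrite -r3 e hk eqxx.
  by apply/eqP => e; move: h1; rewrite -r3 e hk1 eqxx.
have sz : size (removek k s) = 2 * n by rewrite size_removek hs; lia.
have hr a : 0 < a <= 2 * n -> shiftk k (partner (removek k s) a) = partner s (shiftk k a).
  move=> ha; rewrite partner_removek; try lia.
  case: (hf a ha) => r1 r2 r3; case: (hq _ r1 r2 r3) => _ q2 q3.
  by rewrite shiftk_unshiftk.
have hrr a : 0 < a <= 2 * n -> 0 < partner (removek k s) a <= 2 * n.
  move=> ha; rewrite partner_removek; try lia.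
  case: (hf a ha) => r1 r2 r3; case: (hq _ r1 r2 r3).
  rewrite /unshiftk; case: ifP; lia.
split.
  split => //.
  - move=> i hi; split; first exact: hrr.
      apply/eqP => e; case: (hf i hi) => r1 _ _; case: (hp _ r1) => _ /eqP hne _; apply: hne.
      by rewrite -hr // e.
    apply: (@shiftk_inj k); rewrite hr ?hrr // hr //.
    by case: (hf i hi) => r1 _ _; case: (hp _ r1).
  move=> a b ha hb; apply/negP => /and3P[h1 h2 h3].
  case: (hf a ha) => r1 _ _; case: (hf b hb) => r1' _ _.
  move: (hnc _ _ r1 r1') => /negP; apply.
  by rewrite -!hr // !shiftk_lt h1 h2 h3.
apply: (@eq_from_nth _ 0); first by rewrite size_lk sz hs; lia.
move=> j; rewrite size_lk sz => hj.
have := @partner_lk k (removek k s) j.+1 erefl.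
rewrite sz /partner /= => ->; last lia.
case: (eqVneq j.+1 k) => [e1|e1].
  by move: hk; rewrite -e1 /partner /= => ->.
case: (eqVneq j.+1 k.+1) => [e2|e2].
  by move: hk1; rewrite -e2 /partner /= => ->.
have ha : 0 < (if j.+1 < k then j.+1 else j.+1 - 2) <= 2 * n by case: ifP; lia.
have := hr _ ha; rewrite /partner => ->.
rewrite (_ : shiftk k _ = j.+1) //.
case: (ltnP j.+1 k) => h; rewrite /shiftk; first by rewrite h.
rewrite (_ : j.+1 - 2 < k = false); lia.
Qed.

Import GRing.Theory.
Local Open Scope ring_scope.

Lemma coef_nil d : coef [::] d = 0.
Proof. by rewrite /coef big_nil. Qed.
Lemma coef_cons t v d : coef (t :: v) d = (if t.2 == d then t.1 else 0) + coef v d.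
Proof. by rewrite /coef big_cons; case: (t.2 == d); rewrite ?add0r. Qed.
Lemma coef_cat v w d : coef (v ++ w) d = coef v d + coef w d.
Proof. by rewrite /coef big_cat. Qed.
Lemma coef_vscale c v d : coef (vscale c v) d = c * coef v d.
Proof.
elim: v => [|t v IH]; first by rewrite /vscale /= !coef_nil mulr0.
rewrite /vscale /= !coef_cons -/(vscale c v) IH /= mulrDr.
by case: ifP; rewrite ?mulr0.
Qed.
Lemma coef_vsub v w d : coef (vsub v w) d = coef v d - coef w d.
Proof. by rewrite /vsub /vadd coef_cat coef_vscale mulN1r. Qed.

Lemma coef_vlk_lk k v d : coef (vlk k v) (lk k d) = coef v d.
Proof.
elim: v => [|t v IH]; first by rewrite /vlk /= !coef_nil.
rewrite /vlk /= !coef_cons -/(vlk k v) IH /=.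
have -> : (lk k t.2 == lk k d) = (t.2 == d).
  by apply/eqP/eqP => [e|->] //; rewrite -(removek_lk k t.2) e removek_lk.
done.
Qed.

Lemma coef_vlk_0 k v d : (0 < k <= size d)%N -> partner d k != k.+1 ->
  coef (vlk k v) d = 0.
Proof.
move=> hk hp; elim: v => [|t v IH]; first by rewrite /vlk /= !coef_nil.
rewrite /vlk /= !coef_cons -/(vlk k v) IH /=.
case: eqP => [e|_]; last by rewrite add0r.
rewrite -e size_lk in hk; move: hp; rewrite -e partner_lk; first by rewrite eqxx => /eqP; case.
  by case/andP: hk.
by case/andP: hk.
Qed.

Lemma eprime_head_SS v b : eprime_head v b.+2 =
  vsub (vlk b.+2 v) (vscale (Delta b / Delta b.+1) (eprime_head v b.+1)).
Proof. by []. Qed.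

Lemma eprime_head_0 v b d : (b <= size d)%N ->
  (forall j, (0 < j <= b)%N -> partner d j != j.+1) -> coef (eprime_head v b) d = 0.
Proof.
elim: b => [|[|b] IH] hb hj; first by rewrite /= coef_nil.
  by rewrite /=; apply: coef_vlk_0 => //; apply: hj.
rewrite eprime_head_SS coef_vsub coef_vscale IH; last 2 first.
- lia.
- move=> j h; apply: hj; lia.
rewrite mulr0 subr0 coef_vlk_0 //.
apply: hj; lia.
Qed.

Lemma eprime_head_main v a s : (0 < a)%N -> lk a (removek a s) = s -> (a <= size s)%N ->
  (forall j, (0 < j < a)%N -> partner s j != j.+1) ->
  coef (eprime_head v a) s = coef v (removek a s).
Proof.
move=> a0 e hs hj.
case: a a0 e hs hj => [|[|b]] // _ e hs hj.
  by rewrite /= -{1}e coef_vlk_lk.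
rewrite eprime_head_SS coef_vsub coef_vscale eprime_head_0; first last.
- move=> j h; apply: hj; lia.
- lia.
by rewrite mulr0 subr0 -{1}e coef_vlk_lk.
Qed.

Lemma main n s : good n s -> coef (eprime (rseq n s)) s = 1.
Proof.
elim: n s => [|n IH] s g.
  case: g => hs _ _; move: hs; rewrite muln0 => /size0nil ->.
  by rewrite /= coef_cons coef_nil /= addr0.
have [k0 kn hk hj] := fsaP g isT.
have [g' e] := good_removek g k0 hk.
rewrite [rseq _ _]/= [eprime _]/= eprime_head_main //; first exact: IH.
case: g => -> _ _; lia.
Qed.

Theorem mainTheorem11 (n : nat) (alpha : seq nat) (s : seq nat) :
  (1 <= n)%N -> is_ncd n s -> rseq n s = alpha ->
  coef (eprime alpha) s = 1.
Proof. by move=> _ /ncd_good g <-; apply: main. Qed.
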